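(* The upper bound $\mathcal{S}(T,d)\in O(\sigma n)$ (valid for every string $T$ of length $n>d$ over an alphabet of size $\sigma$) is tight when $\sigma\le d$ and $n-d\in\Omega(n)$: for every constant $\gamma\in(0,1)$ there is a constant $c>0$ such that for all integers $\sigma\ge 2$, $d$, $n$ with $\sigma\le d<n$ and $n-d\ge\gamma n$, there exists a string $T'$ of length $n$ over an alphabet of size $\sigma$ with $\mathcal{S}(T',d)\ge c\,\sigma n$.
   Context: For a string $S$ over alphabet $\Sigma$, a string $w\in\Sigma^*$ is a minimal absent word (MAW) of $S$ if $w$ does not occur in $S$ but every proper substring of $w$ (including the empty string) occurs in $S$; $\mathsf{MAW}(S)$ is the set of all MAWs of $S$. $T[a..b]$ denotes the substring of $T$ from position $a$ to $b$. For a string $T$ of length $n>d$, $\mathcal{S}(T,d)=\sum_{i=1}^{n-d}|\mathsf{MAW}(T[i..i+d-1])\bigtriangleup\mathsf{MAW}(T[i+1..i+d])|$, where $\bigtriangleup$ is symmetric difference. *)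

(* Defs.v *)
From mathcomp Require Import all_boot all_order all_algebra.
From mathcomp Require Import reals.
Set Implicit Arguments. Unset Strict Implicit. Unset Printing Implicit Defensive.

Definition substrings {A : eqType} (w : seq A) : seq (seq A) :=
  [seq take j (drop i w) | i <- iota 0 (size w).+1, j <- iota 0 (size w - i).+1].

Definition is_MAW {A : eqType} (S w : seq A) : bool :=
  ~~ infix w S && all (fun u => (u != w) ==> infix u S) (substrings w).

(* |MAW(S1) Δ MAW(S2)| for strings S1, S2 of length d: a MAW of a string of
   length d has length at most d+1 (a MAW w with |w| >= 2 has w[2..] occurring
   in the string), so it suffices to count words of length k <= d+1. *)
Definition maw_symdiff {sigma : nat} (d : nat) (S1 S2 : seq 'I_sigma) : nat :=
  \sum_(k < d.+2)
    #|[set w : k.-tuple 'I_sigma | is_MAW S1 w (+) is_MAW S2 w]|.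

(* T[a..b] (1-indexed): the window of length d starting at position i is
   take d (drop (i-1) T). *)
Definition window {A : Type} (T : seq A) (i d : nat) : seq A :=
  take d (drop i.-1 T).

Definition Sdiff {sigma : nat} (T : seq 'I_sigma) (d : nat) : nat :=
  \sum_(1 <= i < (size T - d).+1)
    maw_symdiff d (window T i d) (window T i.+1 d).

(* Main.v *)
Require Import Defs.
From mathcomp Require Import all_boot all_order all_algebra.
From mathcomp Require Import reals.
From mathcomp Require Import zify ring lra.
Set Implicit Arguments. Unset Strict Implicit. Unset Printing Implicit Defensive.

Section Gen.
Variable A : eqType.

Lemma infix_occ (u S : seq A) : infix u S ->
  exists o, o + size u <= size S /\ forall x0 j, j < size u -> nth x0 u j = nth x0 S (o + j).
Proof.
move/infixP=> [s [s' ->]]; exists (size s); split.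
  by rewrite !size_cat; lia.
by move=> x0 j hj; rewrite nth_cat ltnNge leq_addr /= addKn nth_cat hj.
Qed.

Lemma take_drop_mkseq (h : nat -> A) d o l : o + l <= d ->
  take l (drop o (mkseq h d)) = mkseq (fun j => h (o + j)) l.
Proof.
move=> hl; apply: (@eq_from_nth _ (h 0)).
  by rewrite size_takel ?size_drop ?size_mkseq //; lia.
move=> j; rewrite size_takel ?size_drop ?size_mkseq; last by lia.
move=> hjl.
by rewrite nth_take // nth_drop !nth_mkseq //; lia.
Qed.

Lemma infix_chunk (h : nat -> A) d o l : o + l <= d ->
  infix (mkseq (fun j => h (o + j)) l) (mkseq h d).
Proof.
move=> hl; rewrite -(@take_drop_mkseq h d) //.
exact: infix_trans (infix_take _ _) (infix_drop _ _).
Qed.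

Lemma substr_cases (w u : seq A) : u \in substrings w -> u != w ->
  infix u (behead w) || infix u (take (size w).-1 w).
Proof.
case/allpairsPdep=> i [j [hi hj ->]] hne.
move: hi hj; rewrite !mem_iota /= !add0n => hi hj.
case: i hi hj hne => [|i] hi hj hne.
  rewrite drop0 in hne *; apply/orP; right.
  have hjw : j < size w.
    rewrite ltn_neqAle; apply/andP; split; last by rewrite subn0 in hj; lia.
    by apply/negP=> /eqP hjs; move: hne; rewrite hjs take_size eqxx.
  rewrite -(@take_takel _ j (size w).-1) //; last by lia.
  exact: infix_take.
apply/orP; left.
rewrite -addn1 -drop_drop drop1.
exact: infix_trans (infix_take _ _) (infix_drop _ _).
Qed.

Lemma maw_intro (S w : seq A) : ~~ infix w S -> infix (behead w) S ->
  infix (take (size w).-1 w) S -> is_MAW S w.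
Proof.
move=> h1 h2 h3; apply/andP; split=> //; apply/allP=> u hu; apply/implyP=> hne.
by case/orP: (substr_cases hu hne) => h; apply: infix_trans h _.
Qed.

Lemma maw_not_infix (S w : seq A) : infix w S -> ~~ is_MAW S w.
Proof. by move=> h; rewrite /is_MAW h. Qed.

Lemma maw_not_behead (S w : seq A) : w != [::] -> ~~ infix (behead w) S -> ~~ is_MAW S w.
Proof.
move=> hw hb; rewrite /is_MAW negb_and; apply/orP; right.
apply/allPn; exists (behead w).
  apply/allpairsPdep; exists 1, (size w).-1; split.
  - by rewrite mem_iota; case: (w) hw.
  - by rewrite mem_iota; case: (w) hw => //= x s _; rewrite subn1 /=; lia.
  - by rewrite drop1 -size_behead take_size.
rewrite negb_imply hb andbT; case: (w) hw => //= x s _.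
by apply/eqP=> h; have := congr1 size h => /=; lia.
Qed.
End Gen.

Lemma symdiff_ge sg d (S1 S2 : seq 'I_sg) k q (W : 'I_q -> k.-tuple 'I_sg) :
  k < d.+2 -> injective W ->
  (forall j, is_MAW S1 (W j) (+) is_MAW S2 (W j)) -> q <= maw_symdiff d S1 S2.
Proof.
move=> hk hW hM; rewrite /maw_symdiff (bigD1 (Ordinal hk)) //=.
apply: leq_trans (leq_addr _ _).
rewrite -{1}(card_ord q) -(card_imset (mem 'I_q) hW).
apply: subset_leq_card; apply/subsetP=> w /imsetP [j _ ->].
by rewrite inE hM.
Qed.

Lemma Sdiff_ge sg (T : seq 'I_sg) d q :
  (forall i, 1 <= i <= size T - d -> q <= maw_symdiff d (window T i d) (window T i.+1 d)) ->
  (size T - d) * q <= Sdiff T d.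
Proof.
move=> h; rewrite /Sdiff.
have -> : (size T - d) * q = \sum_(1 <= i < (size T - d).+1) q.
  by rewrite sum_nat_const_nat subSS subn0.
rewrite big_nat_cond [X in _ <= X]big_nat_cond; apply: leq_sum => i /andP [/andP [h1 h2] _].
by apply: h; rewrite h1 /=; lia.
Qed.

Lemma window_mkseq (A : eqType) (h : nat -> A) n i d : i.-1 + d <= n ->
  window (mkseq h n) i d = mkseq (fun j => h (i.-1 + j)) d.
Proof. by move=> hd; rewrite /window (@take_drop_mkseq _ h n). Qed.


Lemma nseq_mkseq (A : eqType) (h : nat -> A) l x :
  (forall j, j < l -> h j = x) -> nseq l x = mkseq h l.
Proof.
move=> hj; apply: (@eq_from_nth _ x); first by rewrite size_nseq size_mkseq.
by move=> j; rewrite size_nseq => hjl; rewrite nth_nseq hjl nth_mkseq // hj.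
Qed.

Definition binf sg d y : 'I_sg.+1 := if odd (y %/ d) then inord 1 else ord0.

Lemma binf_eq sg d y y' : 0 < sg ->
  (binf sg d y == binf sg d y') = (odd (y %/ d) == odd (y' %/ d)).
Proof.
move=> hs; rewrite /binf.
have h1 : (inord 1 : 'I_sg.+1) != ord0 by apply/eqP=> /(congr1 val); rewrite /= inordK.
by case: odd; case: odd => //=; rewrite ?eqxx ?(negbTE h1) // eq_sym (negbTE h1).
Qed.

Lemma bin_shift sg d p : 0 < sg -> 0 < d ->
  1 <= maw_symdiff d (mkseq (fun j => binf sg d (p + j)) d)
                     (mkseq (fun j => binf sg d (p.+1 + j)) d).
Proof.
move=> hs hd.
set r := p %% d; set B := p %/ d; set a := d - r.
have hr : r < d by rewrite ltn_mod.
have hp : p = B * d + r by rewrite /B /r -divn_eq.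
have ha : 0 < a <= d by rewrite /a; lia.
set x := binf sg d p.
have c1 : forall j, j < a -> binf sg d (p + j) = x.
  move=> j hj; apply/eqP; rewrite binf_eq // hp -addnA !divnMDl //.
  by rewrite !divn_small //; lia.
have c2 : forall j, a <= j <= d -> binf sg d (p + j) != x.
  move=> j hj; rewrite binf_eq // hp -addnA !divnMDl //.
  have -> : r + j = 1 * d + (r + j - d) by lia.
  rewrite divnMDl // !divn_small //; last by lia.
  by rewrite !addn0 addn1 /=; case: odd.
have ha1 : a < d.+2 by lia.
apply: (@symdiff_ge _ d _ _ a 1 (fun _ => nseq_tuple a x) ha1).
  by move=> i j _; rewrite (ord1 i) (ord1 j).
move=> _ /=.
have -> : is_MAW (mkseq (fun j => binf sg d (p + j)) d) (nseq a x) = false.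
  apply/negbTE/maw_not_infix.
  rewrite (@nseq_mkseq _ (fun j => binf sg d (p + (0 + j)))); last by move=> j hj; rewrite add0n c1.
  by apply: infix_chunk; lia.
have hpre : infix (nseq a.-1 x) (mkseq (fun j => binf sg d (p.+1 + j)) d).
  rewrite (@nseq_mkseq _ (fun j => binf sg d (p.+1 + (0 + j)))).
    by apply: infix_chunk; lia.
  by move=> j hj; rewrite add0n addSnnS c1 //; lia.
rewrite /= maw_intro //.
- apply/negP=> /infix_occ [o [ho hn]].
  move: ho; rewrite size_nseq size_mkseq => ho.
  have := hn x a.-1; rewrite size_nseq nth_nseq nth_mkseq; last by lia.
  have -> : a.-1 < a by lia.
  move=> /(_ isT) h.
  have e : p.+1 + (o + a.-1) = p + (o + a) by lia.
  rewrite e in h.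
  have := c2 (o + a); rewrite -h eqxx => hc.
  have : a <= o + a <= d by lia.
  by move/hc.
- by case: (a) hpre.
- by rewrite size_nseq take_nseq //; lia.
Qed.


Lemma q_bound sg d : 3 <= sg -> sg < d ->
  sg.+1 <= 8 * ((d.+1) %/ (d %/ sg).+1 - 1).
Proof.
move=> h3 hd; set m := d %/ sg; set Q := d.+1 %/ m.+1.
have hs0 : 0 < sg by lia.
have h1 : m * sg <= d by apply: leq_divM.
have h2 : 1 <= m by rewrite /m leq_divRL //; lia.
have h3m : 3 * m <= d by nia.
have h4 : d.+1 < Q.+1 * m.+1 by apply: ltn_ceil.
have h5 : 2 <= Q by rewrite /Q leq_divRL //; lia.
nia.
Qed.

Definition bigf sg m y : 'I_sg.+1 :=
  if y %% m.+1 == m then inord (1 + (y %/ m.+1) %% sg) else ord0.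

Lemma bigf_blk sg m B t : t <= m ->
  bigf sg m (B * m.+1 + t) = if t == m then inord (1 + B %% sg) else ord0.
Proof.
move=> ht; rewrite /bigf modnMDl modn_small ?ltnS //.
by rewrite divnMDl // divn_small ?ltnS // addn0.
Qed.

Lemma inord_nz sg B : 0 < sg -> (inord (1 + B %% sg) : 'I_sg.+1) != ord0.
Proof.
move=> hs; apply/eqP=> /(congr1 val); rewrite /= inordK //.
by rewrite ltnS ltn_pmod.
Qed.

Lemma bigf_dec m y : exists B t, t <= m /\ y = B * m.+1 + t.
Proof.
exists (y %/ m.+1), (y %% m.+1); split; last exact: divn_eq.
by rewrite -ltnS ltn_pmod.
Qed.

Lemma bigf_uniq sg m y y' : 0 < sg -> bigf sg m y = bigf sg m y' ->
  bigf sg m y != ord0 -> y < y' -> m.+1 * sg <= y' - y.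
Proof.
move=> hs; have [B [t [ht ->]]] := bigf_dec m y.
have [B' [t' [ht' ->]]] := bigf_dec m y'.
rewrite !bigf_blk //.
case: eqP => [-> | _]; last by rewrite eqxx.
case: eqP => [-> | _]; last by move=> ->; rewrite eqxx.
move=> /(congr1 val); rewrite /= !inordK ?ltnS ?ltn_pmod // => /eqP.
rewrite eqn_add2l => /eqP he _ hlt.
have hB : B < B' by nia.
have e1 := divn_eq B sg; have e2 := divn_eq B' sg.
rewrite he in e1.
have hq : B %/ sg < B' %/ sg by nia.
nia.
Qed.


Lemma big_shift sg d p : 3 <= sg -> sg < d ->
  (d.+1) %/ (d %/ sg).+1 - 1 <=
  maw_symdiff d (mkseq (fun j => bigf sg (d %/ sg) (p + j)) d)
                (mkseq (fun j => bigf sg (d %/ sg) (p.+1 + j)) d).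
Proof.
move=> h3 hd; set m := d %/ sg; set q := _ - 1.
have hs0 : 0 < sg by lia.
have hP : d < m.+1 * sg by apply: ltn_ceil.
have h1 : m * sg <= d by apply: leq_divM.
have h2 : 1 <= m by rewrite /m leq_divRL //; lia.
have h3m : 3 * m <= d by nia.
have hQ : d.+1 %/ m.+1 < sg.+1 by rewrite ltn_divLR //; nia.
have hq : q < sg by rewrite /q; lia.
have hk : forall k, k < q -> (k + 2) * m.+1 <= d.+1.
  move=> k hkq; apply: leq_trans (leq_divM d.+1 m.+1).
  by rewrite leq_mul2r; apply/orP; right; rewrite /q in hkq; lia.
set r := p %% m.+1; set A0 := p %/ m.+1; set s := m - r.
have hr : r <= m by rewrite -ltnS ltn_pmod.
have hp : p = A0 * m.+1 + r by apply: divn_eq.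
have hsm : s <= m by lia.
have hps : p + s = A0 * m.+1 + m by lia.
have hc : bigf sg m (p + s) != ord0 by rewrite hps bigf_blk // eqxx inord_nz.
have hz : forall j, j < s -> bigf sg m (p + j) = ord0.
  move=> j hj; have -> : p + j = A0 * m.+1 + (r + j) by lia.
  rewrite bigf_blk; last by lia.
  by case: eqP => //; lia.
pose x k := p + s + k * m.+1.
have hx : forall k, x k = (A0 + k) * m.+1 + m by move=> k; rewrite /x hps; lia.
have hx0 : forall k, bigf sg m (x k) != ord0 by move=> k; rewrite hx bigf_blk // eqxx inord_nz.
have hxz : forall k j, 1 <= j <= m -> bigf sg m (x k + j) = ord0.
  move=> k j hj; have -> : x k + j = (A0 + k).+1 * m.+1 + j.-1 by rewrite hx; lia.
  rewrite bigf_blk; last by lia.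
  by case: eqP => //; lia.
pose w k := bigf sg m (x k) :: mkseq (fun j => bigf sg m (p + j)) s.+1.
have hsz : forall k, size (w k) == s.+2.
  by move=> k; rewrite /w /= ?size_map ?size_iota ?size_mkseq.
have hsd : s.+2 < d.+2 by lia.
apply: (@symdiff_ge _ d _ _ s.+2 q (fun k => Tuple (hsz k)) hsd).
  move=> k1 k2 /(congr1 (fun t : (s.+2).-tuple _ => head ord0 (tval t))) /= he.
  apply/val_inj => /=.
  case: (ltngtP k1 k2) => // hlt.
  - have := bigf_uniq hs0 he (hx0 _) ; rewrite /x.
    have : p + s + k1 * m.+1 < p + s + k2 * m.+1 by rewrite ltn_add2l ltn_mul2r.
    move=> hh /(_ hh) hh2.
    have ltk : k2 < q by [].
    nia.
  - have := bigf_uniq hs0 (esym he) (hx0 _) ; rewrite /x.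
    have : p + s + k2 * m.+1 < p + s + k1 * m.+1 by rewrite ltn_add2l ltn_mul2r.
    move=> hh /(_ hh) hh2.
    have ltk : k1 < q by [].
    nia.
move=> k /=.
have hkq := hk k (ltn_ord k).
have -> : is_MAW (mkseq (fun j => bigf sg m (p.+1 + j)) d) (w k) = false.
  apply/negbTE/maw_not_behead => //=.
  apply/negP=> /infix_occ [o [ho hn]].
  move: ho; rewrite !size_mkseq => ho.
  have := hn ord0 s; rewrite size_mkseq !nth_mkseq //; last by lia.
  move=> /(_ (ltnSn _)) he.
  have hlt : p + s < p.+1 + (o + s) by lia.
  have := bigf_uniq hs0 he hc hlt; lia.
have hwk : size (w k) = s.+2 by apply/eqP.
rewrite addbF; apply: maw_intro.
- apply/negP=> /infix_occ [o [ho hn]].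
  move: ho; rewrite size_mkseq hwk => ho.
  have e : nth ord0 (w k) s.+1 = bigf sg m (p + s).
    by rewrite /w -[nth _ _ _]/(nth ord0 (mkseq _ s.+1) s) nth_mkseq.
  have := hn ord0 s.+1; rewrite hwk e nth_mkseq; last by lia.
  move=> /(_ (ltnSn _)) he.
  have hlt : p + s < p + (o + s.+1) by lia.
  have := bigf_uniq hs0 he hc hlt; lia.
- rewrite -[behead (w k)]/(mkseq (fun j => bigf sg m (p + (0 + j))) s.+1).
  by apply: infix_chunk; lia.
- have -> : take (size (w k)).-1 (w k) =
            mkseq (fun j => bigf sg m (p + ((s + k * m.+1) + j))) s.+1.
    rewrite hwk -[(s.+2).-1]/(s.+1).
    apply: (@eq_from_nth _ ord0).
      by rewrite size_takel ?hwk // size_mkseq.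
    move=> j; rewrite size_takel ?hwk // => hj.
    rewrite nth_take // nth_mkseq //.
    case: j hj => [|j] hj.
      by congr bigf; rewrite /x; lia.
    rewrite -[nth _ (w k) _]/(nth ord0 (mkseq (fun j => bigf sg m (p + j)) s.+1) j).
    rewrite nth_mkseq; last by lia.
    rewrite hz; last by lia.
    have -> : p + (s + k * m.+1 + j.+1) = x k + j.+1 by rewrite /x; lia.
    by rewrite hxz //; lia.
  by apply: infix_chunk; move: hkq hsm; rewrite mulnDl; lia.
Qed.


Lemma construct sg d n : 1 <= sg -> sg < d -> d < n ->
  exists T : seq 'I_sg.+1, size T = n /\
    exists q, sg.+1 <= 8 * q /\ (n - d) * q <= Sdiff T d.
Proof.
move=> h1 hd hn; case: (ltnP sg 3) => hs.
  exists (mkseq (binf sg d) n); split; first by rewrite size_mkseq.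
  exists 1; split; first by lia.
  have := @Sdiff_ge _ (mkseq (binf sg d) n) d 1; rewrite size_mkseq; apply.
  case=> [|p] hi //.
  rewrite !window_mkseq /=; try lia.
  by apply: bin_shift; lia.
exists (mkseq (bigf sg (d %/ sg)) n); split; first by rewrite size_mkseq.
exists ((d.+1) %/ (d %/ sg).+1 - 1); split; first exact: q_bound.
have := @Sdiff_ge _ (mkseq (bigf sg (d %/ sg)) n) d ((d.+1) %/ (d %/ sg).+1 - 1).
rewrite size_mkseq; apply.
case=> [|p] hi //.
rewrite !window_mkseq /=; try lia.
exact: big_shift.
Qed.

Unset Implicit Arguments.
Import Order.TTheory GRing.Theory Num.Theory.
Local Open Scope ring_scope.

Theorem lemma15 (R : realType) (gamma : R) :
  0 < gamma -> gamma < 1 ->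
  exists c : R, 0 < c /\
    forall (sigma d n : nat),
      (2 <= sigma)%N -> (sigma <= d)%N -> (d < n)%N ->
      gamma * n%:R <= (n - d)%:R ->
      exists T' : seq 'I_sigma, size T' = n /\
        c * sigma%:R * n%:R <= (Sdiff T' d)%:R.
Proof.
move=> hg0 hg1; exists (gamma / 8); split; first by rewrite divr_gt0.
case=> [|sg] d n // h2 hd hn hgn.
have [T [hT [q [hq hS]]]] := @construct sg d n h2 hd hn.
exists T; split => //.
have hS' : ((n - d) * q)%:R <= (Sdiff T d)%:R :> R by rewrite ler_nat.
apply: le_trans hS'; rewrite natrM.
have hq' : (sg.+1)%:R <= 8 * q%:R :> R by rewrite -natrM ler_nat.
have hnn : 0 <= n%:R :> R by [].
have hqq : 0 <= q%:R :> R by [].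
have hgn0 : 0 <= gamma * n%:R by rewrite mulr_ge0 // ltW.
have a := ler_wpM2l hgn0 hq'.
have b : gamma * n%:R * (8 * q%:R) <= (n - d)%:R * (8 * q%:R).
  by rewrite ler_wpM2r // mulr_ge0.
have e : gamma / 8 * (sg.+1)%:R * n%:R = (gamma * n%:R * (sg.+1)%:R) / 8.
  by field.
rewrite e ler_pdivrMr //.
apply: (le_trans a); apply: (le_trans b).
by rewrite le_eqVlt; apply/orP; left; apply/eqP; ring.
Qed.
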